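(* Let $k>l>0$ be coprime integers, $\lambda=\lambda_{k,l}$, and let $$T=\begin{pmatrix}1&k(1+\lambda)\\0&1\end{pmatrix},\qquad R=\begin{pmatrix}-1&-1\\1&0\end{pmatrix}.$$ Then the group $G=\langle R,T\rangle\subseteq \mathrm{PSL}(2,\mathbb{R})$ is discrete. Moreover, $$F=\{z\in\mathbb{H}:\ -2<\operatorname{Re}z<k(1+\lambda)-2,\ |z|>1,\ |z+1|>1\}$$ is a fundamental domain for the action of $G$ on $\mathbb{H}$ by Möbius transformations.
   Context: For coprime integers $k>l>0$, $\lambda_{k,l}$ denotes the positive solution of $k(\lambda+1)=l(\lambda^{-1}+1+\lambda)$. $\mathbb{H}$ is the upper half-plane. *)

(* Defs.v *)
From HB Require Import structures.
From mathcomp Require Import all_boot all_order all_algebra.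
From mathcomp Require Import all_classical all_reals topology normedtype.
Set Implicit Arguments. Unset Strict Implicit. Unset Printing Implicit Defensive.
Import Order.TTheory GRing.Theory Num.Theory numFieldNormedType.Exports.
Local Open Scope ring_scope.
Local Open Scope classical_set_scope.

Definition mx2 {R : nzRingType} (a b c d : R) : 'M[R]_2 :=
  \matrix_(i < 2, j < 2)
    if i == 0 :> nat then (if j == 0 :> nat then a else b)
    else (if j == 0 :> nat then c else d).

Inductive gen_group {R : comUnitRingType} (S : 'M[R]_2 -> Prop) : 'M[R]_2 -> Prop :=
  | gg_one : gen_group S 1%:M
  | gg_gen g : S g -> gen_group S g
  | gg_inv g : S g -> gen_group S (invmx g)
  | gg_mul g h : gen_group S g -> gen_group S h -> gen_group S (g *m h).

(* Points of C are pairs (x, y) = x + i y; the upper half-plane. *)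
Definition upper_half {R : realType} : set (R * R) := [set z | 0 < z.2].

(* Möbius action of g = (a b ; c d) on z = x + i y : (a z + b) / (c z + d). *)
Definition mobius {R : realType} (g : 'M[R]_2) (z : R * R) : R * R :=
  let a := g 0 0 in let b := g 0 1 in let c := g 1 0 in let d := g 1 1 in
  let x := z.1 in let y := z.2 in
  let den := (c * x + d) ^+ 2 + (c * y) ^+ 2 in
  (((a * x + b) * (c * x + d) + a * c * y ^+ 2) / den,
   (a * d - b * c) * y / den).

(* A subgroup of PSL(2,R), given by its full preimage Gt in SL(2,R)
   (so Gt is closed under g |-> -g), is discrete iff the identity is
   isolated in Gt (entrywise topology on 2x2 matrices). *)
Definition discrete_SL {R : realType} (Gt : 'M[R]_2 -> Prop) : Prop :=
  exists eps : R, 0 < eps /\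
    forall g, Gt g -> (forall i j, `|g i j - (1%:M : 'M[R]_2) i j| < eps) ->
      g = 1%:M.

(* Fundamental domain (Katok's definition) for the action on H of the
   PSL(2,R) group whose preimage in SL(2,R) is Gt:
   F is an open subset of H, its translates by non-identity elements of
   the PSL group are disjoint from F, and the translates of its closure
   cover H. *)
Definition fundamental_domain {R : realType} (Gt : 'M[R]_2 -> Prop)
    (F : set (R * R)) : Prop :=
  [/\ F `<=` upper_half, open F,
      (forall g, Gt g -> g <> 1%:M -> g <> - 1%:M ->
         forall z, F z -> ~ F (mobius g z)) &
      (forall z, upper_half z -> exists g, Gt g /\ closure F (mobius g z))].

Definition Tmat {R : realType} (k : nat) (lam : R) : 'M[R]_2 :=
  mx2 1 (k%:R * (1 + lam)) 0 1.
Definition Rmat {R : realType} : 'M[R]_2 := mx2 (-1) (-1) 1 0.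

(* Preimage in SL(2,R) of G = <R, T> in PSL(2,R). *)
Definition Gpre {R : realType} (k : nat) (lam : R) : 'M[R]_2 -> Prop :=
  gen_group (fun g => g = Rmat \/ g = Tmat k lam \/ g = - 1%:M).

Definition Fdom {R : realType} (k : nat) (lam : R) : set (R * R) :=
  [set z | 0 < z.2 /\ -2 < z.1 /\ z.1 < k%:R * (1 + lam) - 2 /\
           1 < z.1 ^+ 2 + z.2 ^+ 2 /\ 1 < (z.1 + 1) ^+ 2 + z.2 ^+ 2].

(* Main.v *)
Require Import Defs.
From HB Require Import structures.
From mathcomp Require Import all_boot all_order all_algebra.
From mathcomp Require Import all_classical all_reals topology normedtype.
From mathcomp Require Import ring lra zify.
Import Order.TTheory GRing.Theory Num.Theory numFieldNormedType.Exports.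
Local Open Scope ring_scope.

Section S.
Variable R : realType.

Lemma mx2E (a b c d : R) : let M := mx2 a b c d in
  M 0 0 = a /\ M 0 1 = b /\ M 1 0 = c /\ M 1 1 = d.
Proof. by rewrite /mx2 !mxE. Qed.

Lemma mx2_eta (M : 'M[R]_2) : M = mx2 (M 0 0) (M 0 1) (M 1 0) (M 1 1).
Proof.
apply/matrixP => i j; rewrite !mxE.
case: i => [[|[|i]] Hi]; case: j => [[|[|j]] Hj] //=;
  by congr (M _ _); apply/val_inj.
Qed.

Lemma mx2_mul (a b c d a' b' c' d' : R) :
  mx2 a b c d *m mx2 a' b' c' d' =
  mx2 (a*a' + b*c') (a*b'+b*d') (c*a'+d*c') (c*b'+d*d').
Proof.
apply/matrixP => i j; rewrite !mxE !big_ord_recl big_ord0 !mxE /=.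
by case: (i == 0 :> nat); case: (j == 0 :> nat); rewrite addr0.
Qed.

Lemma det_mx2 (a b c d : R) : \det (mx2 a b c d) = a * d - b * c.
Proof. rewrite (expand_det_row _ 0) !big_ord_recl big_ord0 /cofactor !det_mx11 !mxE /=.
rewrite /bump /= expr0 expr1; ring. Qed.

Lemma mobius_mx2 (a b c d x y : R) : mobius (mx2 a b c d) (x, y) =
  (((a * x + b) * (c * x + d) + a * c * y ^+ 2) / ((c * x + d) ^+ 2 + (c * y) ^+ 2),
   (a * d - b * c) * y / ((c * x + d) ^+ 2 + (c * y) ^+ 2)).
Proof. by rewrite /mobius !mxE. Qed.

Lemma den_pos (c d x y : R) : 0 < y -> (c != 0) || (d != 0) ->
  0 < (c * x + d) ^+ 2 + (c * y) ^+ 2.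
Proof.
move=> y0; case: (eqVneq c 0) => [->|c0] /= H.
  by rewrite !mul0r add0r expr0n /= addr0 exprn_even_gt0.
have : 0 < (c * y) ^+ 2 by rewrite exprn_even_gt0 //= mulf_neq0 // gt_eqF.
by move=> h; apply: (lt_le_trans h); rewrite lerDr sqr_ge0.
Qed.

Lemma det_nz (a b c d : R) : a * d - b * c = 1 -> (c != 0) || (d != 0).
Proof.
move=> h; rewrite -negb_and; apply/negP => /andP [/eqP c0 /eqP d0].
by move: h; rewrite c0 d0 !mulr0 subrr => /eqP; rewrite eq_sym oner_eq0.
Qed.

Lemma mobius_comp2 (p q r s a b c d x y : R) : 0 < y ->
  p * s - q * r = 1 -> a * d - b * c = 1 ->
  mobius (mx2 p q r s *m mx2 a b c d) (x, y) =
  mobius (mx2 p q r s) (mobius (mx2 a b c d) (x, y)).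
Proof.
move=> y0 dA dB.
rewrite mx2_mul !mobius_mx2.

have hD : (c * x + d) ^+ 2 + (c * y) ^+ 2 != 0.
  by rewrite gt_eqF // den_pos // (@det_nz a b _ _ dB).
have hE : ((r*a+s*c) * x + (r*b+s*d)) ^+ 2 + ((r*a+s*c) * y) ^+ 2 != 0.
  rewrite gt_eqF // den_pos // (@det_nz (p*a+q*c) (p*b+q*d) _ _) //.
  by rewrite -[RHS]mul1r -{1}dA -dB; ring.
have kE : (r * (((a * x + b) * (c * x + d) + a * c * y ^+ 2) /
      ((c * x + d) ^+ 2 + (c * y) ^+ 2)) + s) ^+ 2 +
    (r * ((a * d - b * c) * y / ((c * x + d) ^+ 2 + (c * y) ^+ 2))) ^+ 2 =
   (((r * a + s * c) * x + (r * b + s * d)) ^+ 2 + ((r * a + s * c) * y) ^+ 2)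
   / ((c * x + d) ^+ 2 + (c * y) ^+ 2).
  by field; last exact: hD.
rewrite kE.
by congr (_, _); field; rewrite hD hE.
Qed.

Lemma mobius_comp (A B : 'M[R]_2) (z : R * R) : 0 < z.2 ->
  \det A = 1 -> \det B = 1 ->
  mobius (A *m B) z = mobius A (mobius B z).
Proof.
rewrite (mx2_eta A) (mx2_eta B) !det_mx2; case: z => x y /= y0 dA dB.
by rewrite mobius_comp2.
Qed.

Lemma one_mx2 : (1%:M : 'M[R]_2) = mx2 1 0 0 1.
Proof.
apply/matrixP => i j; rewrite !mxE.
by case: i => [[|[|i]] Hi]; case: j => [[|[|j]] Hj].
Qed.

Lemma opp_mx2 (a b c d : R) : - mx2 a b c d = mx2 (-a) (-b) (-c) (-d).
Proof.
apply/matrixP => i j; rewrite !mxE.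
by case: (i == 0 :> nat); case: (j == 0 :> nat).
Qed.

Lemma inv_uniq (A B : 'M[R]_2) : A *m B = 1%:M -> invmx A = B.
Proof.
move=> h; have [uA _] := mulmx1_unit h.
by rewrite -[invmx A]mulmx1 -h mulmxA mulVmx // mul1mx.
Qed.

Arguments inv_uniq {A B}.
Lemma mobiusN (A : 'M[R]_2) z : mobius (- A) z = mobius A z.
Proof.
rewrite (mx2_eta A) opp_mx2; case: z => x y; rewrite !mobius_mx2.
by congr (_, _); congr (_ / _); ring.
Qed.

Variable w : R.
Hypothesis w3 : 3 < w.

Definition Rm : 'M[R]_2 := mx2 (-1) (-1) 1 0.
Definition Ri : 'M[R]_2 := mx2 0 1 (-1) (-1).
Definition Tm : 'M[R]_2 := mx2 1 w 0 1.
Definition Ti : 'M[R]_2 := mx2 1 (-w) 0 1.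

Lemma RmRm : Rm *m Rm = Ri.
Proof. by rewrite /Rm /Ri mx2_mul; congr mx2; ring. Qed.
Lemma RiRi : Ri *m Ri = Rm.
Proof. by rewrite /Rm /Ri mx2_mul; congr mx2; ring. Qed.
Lemma RmRi : Rm *m Ri = 1%:M.
Proof. by rewrite /Rm /Ri mx2_mul one_mx2; congr mx2; ring. Qed.
Lemma RiRm : Ri *m Rm = 1%:M.
Proof. by rewrite /Rm /Ri mx2_mul one_mx2; congr mx2; ring. Qed.
Lemma TmTi : Tm *m Ti = 1%:M.
Proof. by rewrite /Tm /Ti mx2_mul one_mx2; congr mx2; ring. Qed.
Lemma TiTm : Ti *m Tm = 1%:M.
Proof. by rewrite /Tm /Ti mx2_mul one_mx2; congr mx2; ring. Qed.

Inductive lab := LE | LA1 | LA2 | LBp | LBm.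

Inductive NF : lab -> 'M[R]_2 -> Prop :=
| nfE : NF LE 1%:M
| nfA1 l h : NF l h -> (l = LE \/ l = LBp \/ l = LBm) -> NF LA1 (Rm *m h)
| nfA2 l h : NF l h -> (l = LE \/ l = LBp \/ l = LBm) -> NF LA2 (Ri *m h)
| nfBp l h : NF l h -> l <> LBm -> NF LBp (Tm *m h)
| nfBm l h : NF l h -> l <> LBp -> NF LBm (Ti *m h).
Arguments nfA1 {l h}. Arguments nfA2 {l h}. Arguments nfBp {l h}. Arguments nfBm {l h}.

Lemma NF_gen l h s : NF l h -> s = Rm \/ s = Ri \/ s = Tm \/ s = Ti ->
  exists l', NF l' (s *m h).
Proof.
move=> H [->|[->|[->|->]]].
- case: l H => H.
  + by exists LA1; apply: (nfA1 H); left.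
  + inversion H; subst; exists LA2; rewrite mulmxA RmRm; exact: (nfA2 H0).
  + inversion H; subst; exists l; rewrite mulmxA RmRi mul1mx; exact: H0.
  + by exists LA1; apply: (nfA1 H); right; left.
  + by exists LA1; apply: (nfA1 H); right; right.
- case: l H => H.
  + by exists LA2; apply: (nfA2 H); left.
  + inversion H; subst; exists l; rewrite mulmxA RiRm mul1mx; exact: H0.
  + inversion H; subst; exists LA1; rewrite mulmxA RiRi; exact: (nfA1 H0).
  + by exists LA2; apply: (nfA2 H); right; left.
  + by exists LA2; apply: (nfA2 H); right; right.
- case: l H => H.
  + by exists LBp; apply: (nfBp H).
  + by exists LBp; apply: (nfBp H).
  + by exists LBp; apply: (nfBp H).
  + by exists LBp; apply: (nfBp H).
  + inversion H; subst; exists l; rewrite mulmxA TmTi mul1mx; exact: H0.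
- case: l H => H.
  + by exists LBm; apply: (nfBm H).
  + by exists LBm; apply: (nfBm H).
  + by exists LBm; apply: (nfBm H).
  + inversion H; subst; exists l; rewrite mulmxA TiTm mul1mx; exact: H0.
  + by exists LBm; apply: (nfBm H).
Qed.

Arguments NF_gen {l h s}.
Lemma NF_mul l1 h1 l2 h2 : NF l1 h1 -> NF l2 h2 -> exists l, NF l (h1 *m h2).
Proof.
move=> H1 H2; elim: H1 => {l1 h1}.
- by exists l2; rewrite mul1mx.
- move=> l h _ [l' IH] _; rewrite -mulmxA; apply: (NF_gen IH); by left.
- move=> l h _ [l' IH] _; rewrite -mulmxA; apply: (NF_gen IH); by right; left.
- move=> l h _ [l' IH] _; rewrite -mulmxA; apply: (NF_gen IH); by right; right; left.
- move=> l h _ [l' IH] _; rewrite -mulmxA; apply: (NF_gen IH); by right; right; right.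
Qed.

Arguments NF_mul {l1 h1 l2 h2}.
Definition S0 : 'M[R]_2 -> Prop := fun g => g = Rm \/ g = Tm \/ g = - 1%:M.

Lemma invN1 : invmx (- 1%:M : 'M[R]_2) = - 1%:M.
Proof. by apply: inv_uniq; rewrite mulNmx mulmxN opprK mul1mx. Qed.

Lemma gen_NF g : gen_group S0 g ->
  exists l h, NF l h /\ (g = h \/ g = - h).
Proof.
elim => {g}.
- by exists LE, 1%:M; split; [exact: nfE | left].
- move=> g [->|[->|->]].
  + exists LA1, (Rm *m 1%:M); split; [apply: nfA1 nfE _; by left | by left; rewrite mulmx1].
  + exists LBp, (Tm *m 1%:M); split; [by apply: nfBp nfE _ | by left; rewrite mulmx1].
  + by exists LE, 1%:M; split; [exact: nfE | right].
- move=> g [->|[->|->]].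
  + exists LA2, (Ri *m 1%:M); split; [apply: nfA2 nfE _; by left | left].
    by rewrite mulmx1; apply: inv_uniq; exact: RmRi.
  + exists LBm, (Ti *m 1%:M); split; [by apply: nfBm nfE _ | left].
    by rewrite mulmx1; apply: inv_uniq; exact: TmTi.
  + by exists LE, 1%:M; split; [exact: nfE | right; exact: invN1].
- move=> g h _ [l1 [h1 [N1 e1]]] _ [l2 [h2 [N2 e2]]].
  have [l N] := NF_mul N1 N2.
  exists l, (h1 *m h2); split => //.
  case: e1 => ->; case: e2 => ->; rewrite ?mulNmx ?mulmxN ?opprK; by [left|right].
Qed.

Lemma mobius1 (z : R * R) : mobius 1%:M z = z.
Proof. case: z => x y; rewrite one_mx2 mobius_mx2; by congr (_,_); field. Qed.

Lemma mobRm (x y : R) : 0 < x^+2+y^+2 ->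
  mobius Rm (x,y) = (-1 - x/(x^+2+y^+2), y/(x^+2+y^+2)).
Proof. move=> r0; rewrite /Rm mobius_mx2; congr (_,_); field; rewrite ?gt_eqF //. Qed.

Lemma mobRi (x y : R) : 0 < (x+1)^+2+y^+2 ->
  mobius Ri (x,y) = (-(x+1)/((x+1)^+2+y^+2), y/((x+1)^+2+y^+2)).
Proof. move=> r0; rewrite /Ri mobius_mx2; congr (_,_); field; rewrite ?gt_eqF //. Qed.

Lemma mobT (t x y : R) : mobius (mx2 1 t 0 1) (x,y) = (x + t, y).
Proof. by rewrite mobius_mx2; congr (_,_); field. Qed.

Definition region (l : lab) (z : R * R) : Prop :=
  0 < z.2 /\ match l with
  | LE => -2 < z.1 /\ z.1 < w - 2 /\ 1 < z.1 ^+ 2 + z.2 ^+ 2 /\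
          1 < (z.1 + 1) ^+ 2 + z.2 ^+ 2
  | LA1 => (z.1 + 1) ^+ 2 + z.2 ^+ 2 < 1
  | LA2 => z.1 ^+ 2 + z.2 ^+ 2 < 1
  | LBp => w - 2 < z.1
  | LBm => z.1 < -2
  end.

Lemma reg_out l u : region l u -> (l = LE \/ l = LBp \/ l = LBm) ->
  1 < u.1 ^+ 2 + u.2 ^+ 2 /\ 1 < (u.1 + 1) ^+ 2 + u.2 ^+ 2.
Proof.
case: u => x y /= [y0 H] Hl; case: l H Hl => /= H Hl;
  first (by case: H => _ [_ []]); try (by case: Hl => [|[|]]).
  have w3' := w3; have x1 : 1 < x by lra. split; nra.
split; nra.
Qed.

Lemma reg_left l u : region l u -> l <> LBm -> -2 < u.1.
Proof. have w3' := w3; case: u => x y /=; case=> y0; case: l => /= H // _; nra. Qed.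

Lemma reg_right l u : region l u -> l <> LBp -> u.1 < w - 2.
Proof. have w3' := w3; case: u => x y /=; case=> y0; case: l => /= H // _; nra. Qed.

Arguments reg_out {l u}. Arguments reg_left {l u}. Arguments reg_right {l u}.
Lemma R_img u : 0 < u.2 -> 1 < u.1 ^+ 2 + u.2 ^+ 2 -> region LA1 (mobius Rm u).
Proof.
case: u => x y /= y0 r1; have r0 : 0 < x ^+ 2 + y ^+ 2 by apply: lt_trans r1.
rewrite mobRm // /region /=; split; first exact: divr_gt0.
have -> : (-1 - x / (x ^+ 2 + y ^+ 2) + 1) ^+ 2 + (y / (x ^+ 2 + y ^+ 2)) ^+ 2
   = (x ^+ 2 + y ^+ 2)^-1 by field; rewrite gt_eqF.
by rewrite invf_lt1.
Qed.

Lemma Ri_img u : 0 < u.2 -> 1 < (u.1 + 1) ^+ 2 + u.2 ^+ 2 -> region LA2 (mobius Ri u).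
Proof.
case: u => x y /= y0 r1; have r0 : 0 < (x + 1) ^+ 2 + y ^+ 2 by apply: lt_trans r1.
rewrite mobRi // /region /=; split; first exact: divr_gt0.
have -> : (- (x + 1) / ((x + 1) ^+ 2 + y ^+ 2)) ^+ 2 + (y / ((x + 1) ^+ 2 + y ^+ 2)) ^+ 2
   = ((x + 1) ^+ 2 + y ^+ 2)^-1 by field; rewrite gt_eqF.
by rewrite invf_lt1.
Qed.

Lemma detRm : \det Rm = 1. Proof. rewrite /Rm det_mx2; ring. Qed.
Lemma detRi : \det Ri = 1. Proof. rewrite /Ri det_mx2; ring. Qed.
Lemma detTm : \det Tm = 1. Proof. rewrite /Tm det_mx2; ring. Qed.
Lemma detTi : \det Ti = 1. Proof. rewrite /Ti det_mx2; ring. Qed.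

Lemma NF_region l h z : NF l h -> region LE z -> \det h = 1 /\ region l (mobius h z).
Proof.
move=> H Fz; have y0 : 0 < z.2 by case: Fz.
elim: H => {l h}.
- by rewrite det1 mobius1.
- move=> l h _ [dh IH] Hl; rewrite det_mulmx detRm dh mulr1 mobius_comp // ?detRm //.
  split => //; have [u1 _] := reg_out IH Hl; by apply: R_img; [case: IH|].
- move=> l h _ [dh IH] Hl; rewrite det_mulmx detRi dh mulr1 mobius_comp // ?detRi //.
  split => //; have [_ u1] := reg_out IH Hl; by apply: Ri_img; [case: IH|].
- move=> l h _ [dh IH] Hl; rewrite det_mulmx detTm dh mulr1 mobius_comp // ?detTm //.
  split => //; have u1 := reg_left IH Hl; case: IH; case: (mobius h z) u1 => x y /= u1 y1 _.
  rewrite /Tm mobT /region /=; split => //; have w3' := w3; lra.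
- move=> l h _ [dh IH] Hl; rewrite det_mulmx detTi dh mulr1 mobius_comp // ?detTi //.
  split => //; have u1 := reg_right IH Hl; case: IH; case: (mobius h z) u1 => x y /= u1 y1 _.
  rewrite /Ti mobT /region /=; split => //; have w3' := w3; lra.
Qed.

Lemma NF_E h : NF LE h -> h = 1%:M.
Proof. by move=> H; inversion H. Qed.

Arguments gen_NF {g}. Arguments NF_region {l h z}. Arguments NF_E {h}.
Lemma disjoint g z : gen_group S0 g -> g <> 1%:M -> g <> - 1%:M ->
  region LE z -> ~ region LE (mobius g z).
Proof.
move=> Gg g1 gN1 Fz; have [l [h [N e]]] := gen_NF Gg.
have [_ Rh] := NF_region N Fz.
have -> : mobius g z = mobius h z by case: e => ->; rewrite ?mobiusN.
case: l N Rh => N [y0 Rh] [_ FF].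
- by move: e; rewrite (NF_E N) => [[]].
- by move: Rh FF => /=; lra.
- by move: Rh FF => /=; lra.
- by move: Rh FF => /=; lra.
- by move: Rh FF => /=; lra.
Qed.

Lemma Gdet g : gen_group S0 g -> \det g = 1.
Proof.
elim => {g}.
- exact: det1.
- move=> g [->|[->|->]]; first exact: detRm; first exact: detTm.
  by rewrite one_mx2 opp_mx2 det_mx2; ring.
- move=> g [->|[->|->]]; rewrite det_inv.
  + by rewrite detRm invr1.
  + by rewrite detTm invr1.
  + by rewrite one_mx2 opp_mx2 det_mx2 -[X in X^-1]/((-1) * (-1) - (-0) * (-0)) mulrNN !mul1r oppr0 mulr0 subr0 invr1.
- by move=> g h _ dg _ dh; rewrite det_mulmx dg dh mulr1.
Qed.

Lemma GTi : gen_group S0 Ti.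
Proof. rewrite -(inv_uniq TmTi); apply: gg_inv; by right; left. Qed.
Lemma GRi : gen_group S0 Ri.
Proof. rewrite -(inv_uniq RmRi); apply: gg_inv; by left. Qed.
Lemma GRm : gen_group S0 Rm.
Proof. by apply: gg_gen; left. Qed.

Lemma GTnat (n : nat) : gen_group S0 (mx2 1 (n%:R * w) 0 1) /\
                         gen_group S0 (mx2 1 (- (n%:R * w)) 0 1).
Proof.
elim: n => [|n [IH1 IH2]].
  by rewrite mul0r oppr0 -one_mx2; split; exact: gg_one.
split.
  have -> : mx2 1 (n.+1%:R * w) 0 1 = Tm *m mx2 1 (n%:R * w) 0 1.
    by rewrite /Tm mx2_mul; congr mx2; rewrite -?natr1; ring.
  by apply: gg_mul => //; apply: gg_gen; right; left.
have -> : mx2 1 (- (n.+1%:R * w)) 0 1 = Ti *m mx2 1 (- (n%:R * w)) 0 1.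
  by rewrite /Ti mx2_mul; congr mx2; rewrite -?natr1; ring.
by apply: gg_mul => //; exact: GTi.
Qed.

Lemma translate (x : R) : exists t, (t = 0 \/ w <= t \/ t <= - w) /\
  gen_group S0 (mx2 1 t 0 1) /\ -2 <= x + t /\ x + t < w - 2.
Proof.
have w0 : 0 < w by have := w3; lra.
set q := Num.floor ((x + 2) / w).
have q1 : q%:~R <= (x + 2) / w := floor_le _.
have q2 : (x + 2) / w < (q + 1)%:~R := floorD1_gt _.
rewrite ler_pdivlMr // in q1; rewrite ltr_pdivrMr // intrD in q2.
exists (- (q%:~R * w)); split; last first.
  split; last by split; lra.
  case: q {q1 q2} => n.
    by rewrite /= -/(n%:R) ; case: (GTnat n).
  rewrite NegzE mulrNz mulNr opprK -/((n.+1)%:R); by case: (GTnat n.+1).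
case: q {q1 q2} => [[|n]|n].
- by left; rewrite mul0r oppr0.
- right; right; rewrite lerN2 ler_peMl ?(ltW w0) //.
  by change (1 <= (n.+1)%:R :> R); rewrite ler1n.
- right; left; rewrite NegzE mulrNz mulNr opprK ler_peMl ?(ltW w0) //.
  by change (1 <= (n.+1)%:R :> R); rewrite ler1n.
Qed.

Definition good (z : R * R) := 0 < z.2 /\ -2 <= z.1 /\ z.1 <= w - 2 /\
  1 <= z.1 ^+ 2 + z.2 ^+ 2 /\ 1 <= (z.1 + 1) ^+ 2 + z.2 ^+ 2.

Lemma stepA (x1 y t2 : R) : 0 < y -> x1 ^+ 2 + y ^+ 2 < 1 ->
  x1 ^+ 2 + y ^+ 2 <= (x1 + 1) ^+ 2 + y ^+ 2 ->
  (t2 = 0 \/ w <= t2 \/ t2 <= - w) ->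
  -2 <= (-1 - x1 / (x1 ^+ 2 + y ^+ 2)) + t2 ->
  (-1 - x1 / (x1 ^+ 2 + y ^+ 2)) + t2 < w - 2 ->
  ((-1 - x1 / (x1 ^+ 2 + y ^+ 2)) + t2) ^+ 2 + (y / (x1 ^+ 2 + y ^+ 2)) ^+ 2 < 1 \/
  ((-1 - x1 / (x1 ^+ 2 + y ^+ 2)) + t2 + 1) ^+ 2 + (y / (x1 ^+ 2 + y ^+ 2)) ^+ 2 < 1 ->
  (w - 2) ^+ 2 * y <= y / (x1 ^+ 2 + y ^+ 2).
Proof.
move=> y0 r1 rs.
have r0 : 0 < x1 ^+ 2 + y ^+ 2 by nra.
set r := x1 ^+ 2 + y ^+ 2 in r1 rs r0 *; set s := (x1 + 1) ^+ 2 + y ^+ 2 in rs *.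
set u := -1 - x1 / r; set v := y / r.
have e1 : (u + 1) ^+ 2 + v ^+ 2 = r^-1 by rewrite /u /v /r; field; exact: lt0r_neq0 r0.
have e2 : u ^+ 2 + v ^+ 2 = s / r by rewrite /u /v /s /r; field; exact: lt0r_neq0 r0.
have ir1 : 1 < r^-1 by rewrite invf_gt1.
have sr1 : 1 <= s / r by rewrite ler_pdivlMr // mul1r.
have wv : (w - 2) ^+ 2 <= r^-1 -> (w - 2) ^+ 2 * y <= v.
  by move=> h; rewrite /v mulrC ler_pM2l.
have w3' := w3.
move=> T u2 u3 bad; apply: wv; rewrite -e1.
have ub : u + t2 < 1 by case: bad => h; nra.
case: T => [t0|[T|T]].
- exfalso; move: bad; rewrite t0 addr0; case=> h; lra.
- have : u + 1 < 2 - w by lra.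
  move=> h; have := sqr_ge0 v; nra.
- have : w - 1 <= u + 1 by lra.
  move=> h; have := sqr_ge0 v; nra.
Qed.

Lemma stepB (x1 y t2 : R) : 0 < y -> (x1 + 1) ^+ 2 + y ^+ 2 < 1 ->
  (x1 + 1) ^+ 2 + y ^+ 2 <= x1 ^+ 2 + y ^+ 2 ->
  (t2 = 0 \/ w <= t2 \/ t2 <= - w) ->
  -2 <= (- (x1 + 1) / ((x1 + 1) ^+ 2 + y ^+ 2)) + t2 ->
  (- (x1 + 1) / ((x1 + 1) ^+ 2 + y ^+ 2)) + t2 < w - 2 ->
  ((- (x1 + 1) / ((x1 + 1) ^+ 2 + y ^+ 2)) + t2) ^+ 2 + (y / ((x1 + 1) ^+ 2 + y ^+ 2)) ^+ 2 < 1 \/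
  ((- (x1 + 1) / ((x1 + 1) ^+ 2 + y ^+ 2)) + t2 + 1) ^+ 2 + (y / ((x1 + 1) ^+ 2 + y ^+ 2)) ^+ 2 < 1 ->
  (w - 2) ^+ 2 * y <= y / ((x1 + 1) ^+ 2 + y ^+ 2).
Proof.
move=> y0 r1 rs.
have h1 := sqr_ge0 (x1 + 1).
have h2 : 0 < y ^+ 2 by rewrite exprn_gt0.
have r0 : 0 < (x1 + 1) ^+ 2 + y ^+ 2 by lra.
set r := (x1 + 1) ^+ 2 + y ^+ 2 in r1 rs r0 *; set s := x1 ^+ 2 + y ^+ 2 in rs *.
set u := - (x1 + 1) / r; set v := y / r.
have e1 : u ^+ 2 + v ^+ 2 = r^-1 by rewrite /u /v /r; field; exact: lt0r_neq0 r0.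
have e2 : (u + 1) ^+ 2 + v ^+ 2 = s / r by rewrite /u /v /s /r; field; exact: lt0r_neq0 r0.
have ir1 : 1 < r^-1 by rewrite invf_gt1.
have sr1 : 1 <= s / r by rewrite ler_pdivlMr // mul1r.
have wv : (w - 2) ^+ 2 <= r^-1 -> (w - 2) ^+ 2 * y <= v.
  by move=> h; rewrite /v mulrC ler_pM2l.
have w3' := w3.
move=> T u2 u3 bad; apply: wv; rewrite -e1.
have ub : u + t2 < 1 by case: bad => h; nra.
case: T => [t0|[T|T]].
- exfalso; move: bad; rewrite t0 addr0; case=> h; lra.
- have : u < 1 - w by lra.
  move=> h; have := sqr_ge0 v; nra.
- have : w - 2 <= u by lra.
  move=> h; have := sqr_ge0 v; nra.
Qed.

Lemma compG (A B : 'M[R]_2) z : gen_group S0 A -> gen_group S0 B -> 0 < z.2 ->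
  mobius (A *m B) z = mobius A (mobius B z).
Proof. by move=> GA GB y0; rewrite mobius_comp // Gdet. Qed.

Lemma good_or_bad (x2 y2 : R) : 0 < y2 -> -2 <= x2 -> x2 < w - 2 ->
  good (x2, y2) \/ (x2 ^+ 2 + y2 ^+ 2 < 1 \/ (x2 + 1) ^+ 2 + y2 ^+ 2 < 1).
Proof.
move=> y0 t1 t2.
case: (lerP 1 (x2 ^+ 2 + y2 ^+ 2)) => h1; last by right; left.
case: (lerP 1 ((x2 + 1) ^+ 2 + y2 ^+ 2)) => h2; last by right; right.
by left; split=> //; split=> //; split; [exact: ltW|].
Qed.

Arguments good_or_bad {x2 y2}.
Lemma finish n M (x y x2 y2 : R) :
  (forall x y : R, 0 < y -> 1 < ((w - 2) ^+ 2) ^+ n * y ->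
    exists g, gen_group S0 g /\ good (mobius g (x, y))) ->
  gen_group S0 M -> 0 < y -> 0 < y2 -> mobius M (x, y) = (x2, y2) ->
  -2 <= x2 -> x2 < w - 2 ->
  ((x2 ^+ 2 + y2 ^+ 2 < 1 \/ (x2 + 1) ^+ 2 + y2 ^+ 2 < 1) -> (w - 2) ^+ 2 * y <= y2) ->
  1 < ((w - 2) ^+ 2) ^+ n.+1 * y ->
  exists g, gen_group S0 g /\ good (mobius g (x, y)).
Proof.
move=> IH GM y0 y20 eM t1 t2 st hy.
case: (good_or_bad y20 t1 t2) => [gd|bd].
  by exists M; rewrite eM.
have cy := st bd.
have [g [Gg gd]] : exists g, gen_group S0 g /\ good (mobius g (x2, y2)).
  apply: IH => //; apply: (lt_le_trans hy).
  rewrite exprSr -mulrA ler_pM2l //; apply: exprn_gt0.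
  by have := w3; nra.
exists (g *m M); split; first exact: gg_mul.
by rewrite compG // eM.
Qed.

Arguments finish {n M x y x2 y2}.
Lemma cover n : forall x y : R, 0 < y -> 1 < ((w - 2) ^+ 2) ^+ n * y ->
  exists g, gen_group S0 g /\ good (mobius g (x, y)).
Proof.
have w3' := w3.
elim: n => [|n IH] x y y0 hy.
  have [t [_ [Gt [t1 t2]]]] := translate x.
  exists (mx2 1 t 0 1); split => //; rewrite mobT /good /=.
  rewrite expr0 mul1r in hy.
  have := sqr_ge0 (x + t); have := sqr_ge0 (x + t + 1).
  have : 1 < y ^+ 2 by rewrite expr2; nra.
  move=> *; do 4! (split; first by lra); lra.
have [t [_ [Gt [t1 t2]]]] := translate x.
set x1 := x + t in t1 t2.
have e1 : mobius (mx2 1 t 0 1) (x, y) = (x1, y) by rewrite mobT.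
case: (good_or_bad y0 t1 t2) => [gd|bad]; first by exists (mx2 1 t 0 1); rewrite e1.
case: (lerP (x1 ^+ 2 + y ^+ 2) ((x1 + 1) ^+ 2 + y ^+ 2)) => hAB.
  have r1 : x1 ^+ 2 + y ^+ 2 < 1 by case: bad => h; lra.
  have r0 : 0 < x1 ^+ 2 + y ^+ 2 by have := sqr_ge0 x1; have : 0 < y ^+ 2 := exprn_gt0 _ y0; lra.
  have [t' [T' [Gt' [t1' t2']]]] := translate (-1 - x1 / (x1 ^+ 2 + y ^+ 2)).
  apply: (finish IH (M := mx2 1 t' 0 1 *m (Rm *m mx2 1 t 0 1))
    (x2 := -1 - x1 / (x1 ^+ 2 + y ^+ 2) + t') (y2 := y / (x1 ^+ 2 + y ^+ 2))) => //.
  - by apply: gg_mul => //; apply: gg_mul => //; exact: GRm.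
  - exact: divr_gt0.
  - rewrite compG //; last by apply: gg_mul => //; exact: GRm.
    by rewrite compG // ?e1 ?mobRm ?mobT //; exact: GRm.
  - exact: stepA.
have r1 : (x1 + 1) ^+ 2 + y ^+ 2 < 1 by case: bad => h; lra.
have r0 : 0 < (x1 + 1) ^+ 2 + y ^+ 2 by have := sqr_ge0 (x1 + 1); have : 0 < y ^+ 2 := exprn_gt0 _ y0; lra.
have [t' [T' [Gt' [t1' t2']]]] := translate (- (x1 + 1) / ((x1 + 1) ^+ 2 + y ^+ 2)).
apply: (finish IH (M := mx2 1 t' 0 1 *m (Ri *m mx2 1 t 0 1))
    (x2 := - (x1 + 1) / ((x1 + 1) ^+ 2 + y ^+ 2) + t') (y2 := y / ((x1 + 1) ^+ 2 + y ^+ 2))) => //.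
- by apply: gg_mul => //; apply: gg_mul => //; exact: GRi.
- exact: divr_gt0.
- rewrite compG //; last by apply: gg_mul => //; exact: GRi.
  by rewrite compG // ?e1 ?mobRi ?mobT //; exact: GRi.
- apply: stepB => //; exact: ltW.
Qed.

Lemma discrete : exists eps : R, 0 < eps /\
    forall g, gen_group S0 g -> (forall i j, `|g i j - (1%:M : 'M[R]_2) i j| < eps) ->
      g = 1%:M.
Proof.
have w3' := w3.
exists (1 / 10); split; first lra.
move=> g Gg H.
have ha := H 0 0; have hb := H 0 1; have hc := H 1 0; have hd := H 1 1.
rewrite !mxE /= in ha hb hc hd.
rewrite subr0 in hb hc.
move: ha hb hc hd; rewrite !ltr_norml.
move=> /andP [a1 a2] /andP [b1 b2] /andP [c1 c2] /andP [d1 d2].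
have dg := @Gdet g Gg; rewrite (mx2_eta g) det_mx2 in dg.
case: (eqVneq g 1%:M) => // g1.
have gN : g <> - 1%:M.
  move=> e; move: a1; rewrite e !mxE /=; lra.
have Fz : region LE (0, 2) by rewrite /region /=; (split; [|split; [|split; [|split]]]); lra.
exfalso; apply: (@disjoint g (0, 2) Gg (fun e => negP g1 (introT eqP e)) gN Fz).
rewrite (mx2_eta g) mobius_mx2 dg.
set a := g 0 0 in a1 a2 *; set b := g 0 1 in b1 b2 *; set c := g 1 0 in c1 c2 *; set d := g 1 1 in d1 d2 *.
set D := (c * 0 + d) ^+ 2 + (c * 2) ^+ 2.
set N := (a * 0 + b) * (c * 0 + d) + a * c * 2 ^+ 2.
have eD : D = d * d + 4 * (c * c) by rewrite /D; ring.
have eN : N = b * d + 4 * (a * c) by rewrite /N; ring.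
have D1 : 8 / 10 < D by rewrite eD; nra.
have D2 : D < 13 / 10 by rewrite eD; nra.
have N1 : - (7 / 10) < N by rewrite eN; nra.
have N2 : N < 7 / 10 by rewrite eN; nra.
have D0 : 0 < D by lra.
have y1 : 1 < 1 * 2 / D by rewrite ltr_pdivlMr //; lra.
have x1 : -1 < N / D by rewrite ltr_pdivlMr //; lra.
have x2 : N / D < 1 by rewrite ltr_pdivrMr //; lra.
clearbody D N.
rewrite /region /=; (split; [|split; [|split; [|split]]]); try lra.
  have := sqr_ge0 (N / D); nra.
have := sqr_ge0 (N / D + 1); nra.
Qed.
End S.

Local Open Scope classical_set_scope.
Section T3.
Variable R : realType.

Lemma cont_fst : continuous (@fst R R).
Proof. move=> z; exact: cvg_fst. Qed.
Lemma cont_snd : continuous (@snd R R).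
Proof. move=> z; exact: cvg_snd. Qed.

Lemma open_pos (g : R * R -> R) : continuous g -> open [set z | 0 < g z].
Proof. move=> cg; have h := @open_comp _ _ g _ (fun z _ => cg z) (@open_gt R 0). exact: h. Qed.

Lemma cont_poly (a b c : R) :
  continuous (fun z : R * R => (z.1 + a) * (z.1 + a) + z.2 * z.2 + c).
Proof.
move=> z.
apply: (@continuousD _ _ _ (fun z : R * R => (z.1 + a) * (z.1 + a) + z.2 * z.2) (fun=> c)).
  apply: (@continuousD _ _ _ (fun z : R * R => (z.1 + a) * (z.1 + a)) (fun z => z.2 * z.2)).
    apply: (@continuousM _ _ (fun z : R * R => z.1 + a) (fun z : R * R => z.1 + a));
    by apply: (@continuousD _ _ _ (fun z : R * R => z.1) (fun=> a)); [exact: cont_fst| exact: cvg_cst].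
  by apply: (@continuousM _ _ (fun z : R * R => z.2) (fun z : R * R => z.2)); exact: cont_snd.
exact: cvg_cst.
Qed.

Lemma cont_lin (a b c : R) : continuous (fun z : R * R => a * z.1 + b * z.2 + c).
Proof.
move=> z.
apply: (@continuousD _ _ _ (fun z : R * R => a * z.1 + b * z.2) (fun=> c)); last exact: cvg_cst.
apply: (@continuousD _ _ _ (fun z : R * R => a * z.1) (fun z : R * R => b * z.2)).
  apply: (@continuousM _ _ (fun=> a) (fun z : R * R => z.1)); [exact: cvg_cst|exact: cont_fst].
apply: (@continuousM _ _ (fun=> b) (fun z : R * R => z.2)); [exact: cvg_cst|exact: cont_snd].
Qed.

Lemma open_F (w : R) : open [set z : R * R | 0 < z.2 /\ -2 < z.1 /\ z.1 < w - 2 /\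
           1 < z.1 ^+ 2 + z.2 ^+ 2 /\ 1 < (z.1 + 1) ^+ 2 + z.2 ^+ 2].
Proof.
have -> : [set z : R * R | 0 < z.2 /\ -2 < z.1 /\ z.1 < w - 2 /\
           1 < z.1 ^+ 2 + z.2 ^+ 2 /\ 1 < (z.1 + 1) ^+ 2 + z.2 ^+ 2] =
  [set z | 0 < 0 * z.1 + 1 * z.2 + 0] `&` ([set z | 0 < 1 * z.1 + 0 * z.2 + 2] `&`
  ([set z | 0 < (-1) * z.1 + 0 * z.2 + (w - 2)] `&`
  ([set z | 0 < (z.1 + 0) * (z.1 + 0) + z.2 * z.2 + (-1)] `&`
   [set z | 0 < (z.1 + 1) * (z.1 + 1) + z.2 * z.2 + (-1)]))).
  apply/seteqP; split => -[x y] /=; rewrite !expr2 !addr0;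
    move=> [h1 [h2 [h3 [h4 h5]]]]; (split; [|split; [|split; [|split]]]); lra.
by apply: openI; [|apply: openI; [|apply: openI; [|apply: openI]]]; apply: open_pos;
 [exact: (cont_lin 0 1 0) | exact: (cont_lin 1 0 2) | exact: (cont_lin (-1) 0 (w-2)) | exact: (cont_poly 0 0 (-1)) | exact: (cont_poly 1 0 (-1))].
Qed.
End T3.
Section T4a.
Variable R : realType.
Lemma nb (z : R * R) (B : set (R * R)) : nbhs z B ->
  exists2 e : R, 0 < e & forall p : R * R, `|z.1 - p.1| < e -> `|z.2 - p.2| < e -> B p.
Proof.
move=> /nbhs_ballP [e e0 H]; exists e => // p h1 h2; apply: H.
split; rewrite -ball_normE /ball_ /=; by [].
Qed.
End T4a.
Section T2.
Variable R : realType.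
Lemma closure_good (w : R) (z : R * R) : 0 < w -> 0 < z.2 -> -2 <= z.1 -> z.1 <= w - 2 ->
  1 <= z.1 ^+ 2 + z.2 ^+ 2 -> 1 <= (z.1 + 1) ^+ 2 + z.2 ^+ 2 ->
  closure [set z : R * R | 0 < z.2 /\ -2 < z.1 /\ z.1 < w - 2 /\
           1 < z.1 ^+ 2 + z.2 ^+ 2 /\ 1 < (z.1 + 1) ^+ 2 + z.2 ^+ 2] z.
Proof.
case: z => x y /= w0 y0 h1 h2 h3 h4 B /nb [e e0 H].
set d := w / 2 - 2 - x.
set K := (x ^+ 2 + d ^+ 2 + (x + 1) ^+ 2 + 1) / y.
have eK : y * K = x ^+ 2 + d ^+ 2 + (x + 1) ^+ 2 + 1 by rewrite /K; field; exact: lt0r_neq0.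
have K0 : 0 < K.
  apply: divr_gt0 => //; have := sqr_ge0 x; have := sqr_ge0 d; have := sqr_ge0 (x + 1); lra.
have d1 : 0 < `|d| + 1 by have := normr_ge0 d; lra.
set t := Num.min 1 (Num.min (e / (`|d| + 1)) (e / (K + 1))).
have t0 : 0 < t by rewrite !lt_min ltr01 !divr_gt0 //; lra.
have t1 : t <= 1 by rewrite ge_min lexx.
have t2 : t * (`|d| + 1) <= e.
  by rewrite -ler_pdivlMr // ge_min; apply/orP; right; rewrite ge_min lexx.
have t3 : t * (K + 1) <= e.
  rewrite -ler_pdivlMr; last lra.
  by rewrite ge_min; apply/orP; right; rewrite ge_min lexx orbT.
have dx : d = w / 2 - 2 - x by [].
clearbody t K d.
exists (x + t * d, y + t * K); split; last first.
  apply: H => /=.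
    rewrite opprD addrA subrr add0r normrN normrM (gtr0_norm t0); nra.
  rewrite opprD addrA subrr add0r normrN normrM (gtr0_norm t0) (gtr0_norm K0); nra.
have w2 : 0 < w / 2 by apply: divr_gt0.
have hw : w / 2 - 2 < w - 2 by lra.
have tK : 0 < t * K by apply: mulr_gt0.
split => /=; first by lra.
have e1 : t * d = t * (w / 2) - 2 * t - t * x by rewrite dx; ring.
have p1 : 0 <= (1 - t) * (x + 2) by apply: mulr_ge0; lra.
have p2 : 0 < t * (w / 2) by apply: mulr_gt0.
have p3 : 0 <= (1 - t) * (w - 2 - x) by apply: mulr_ge0; lra.
have p4 : 0 < t * w by apply: mulr_gt0.
have e2 : t * (w / 2) = (t * w) / 2 by rewrite mulrA.
split; first by lra.
split; first by lra.
have hyK : 0 < x * d + y * K.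
  rewrite eK; have := sqr_ge0 (x + d); have := sqr_ge0 x; have := sqr_ge0 d; have := sqr_ge0 (x + 1); lra.
have hyK' : 0 < (x + 1) * d + y * K.
  rewrite eK; have := sqr_ge0 (x + 1 + d); have := sqr_ge0 x; have := sqr_ge0 d; have := sqr_ge0 (x + 1); lra.
have q1 := mulr_gt0 t0 hyK; have q2 := mulr_gt0 t0 hyK'.
have := sqr_ge0 (t * d); have := sqr_ge0 (t * K).
move=> *; split; nra.
Qed.
End T2.

Local Close Scope classical_set_scope.

Lemma bern (R : realType) (c : R) (n : nat) : 1 <= c -> 1 + n%:R * (c - 1) <= c ^+ n.
Proof.
move=> c1; elim: n => [|n IH]; first by rewrite mul0r addr0 expr0.
rewrite exprS -natr1.
have h : 1 <= c ^+ n by exact: exprn_ege1.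
nra.
Qed.

Lemma w_gt3 (R : realType) (k l : nat) (lam : R) :
  (0 < l)%N -> (l < k)%N -> 0 < lam ->
  k%:R * (lam + 1) = l%:R * (lam^-1 + 1 + lam) -> 3 < k%:R * (1 + lam).
Proof.
move=> l0 lk lam0 e.
case: (leqP 3 k) => k3.
  have : (3 : R) <= k%:R by rewrite (ler_nat R 3 k).
  move=> h; nra.
have k2 : k = 2%N by lia.
have l1 : l = 1%N by lia.
subst k l.
have il : lam * lam^-1 = 1 by rewrite mulfV // gt_eqF.
have e2 : lam * lam + lam = 1.
  have : lam * (2%:R * (lam + 1)) = lam * (1%:R * (lam^-1 + 1 + lam)) by rewrite e.
  rewrite mul1r !mulrDr il => h; nra.
have : 1 / 2 < lam by nra.
move=> h; lra.
Qed.

Theorem mainTheorem8 (R : realType) (k l : nat) (lam : R) :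
  (0 < l)%N -> (l < k)%N -> coprime k l ->
  0 < lam -> k%:R * (lam + 1) = l%:R * (lam^-1 + 1 + lam) ->
  discrete_SL (Gpre k lam) /\ fundamental_domain (Gpre k lam) (Fdom k lam).
Proof.
move=> l0 lk _ lam0 e.
have w3 := @w_gt3 R k l lam l0 lk lam0 e.
set w := k%:R * (1 + lam) in w3.
have GE : Gpre k lam = gen_group (@S0 R w) by [].
rewrite GE; split.
  exact: discrete.
split.
- by move=> z [].
- exact: open_F.
- move=> g Gg g1 gN z Fz; exact: (@disjoint R w w3 g z Gg g1 gN Fz).
- move=> [x y] /= y0.
  have c1 : 1 < (w - 2) ^+ 2 by nra.
  set c := (w - 2) ^+ 2 in c1.
  have [n hn] : exists n : nat, 1 < c ^+ n * y.
    have c0 : 0 < c - 1 by lra.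
    have b0 : 0 <= y^-1 / (c - 1) by rewrite divr_ge0 // ltW // invr_gt0.
    exists (Num.bound (y^-1 / (c - 1))).
    set n := Num.bound _ in b0 *.
    have hb := archi_boundP b0; rewrite -/n ltr_pdivrMr // in hb.
    have := @bern R c n (ltW c1).
    move=> hc; rewrite -(ltr_pdivrMr _ _ y0) mul1r; lra.
  have [g [Gg gd]] := @cover R w w3 n x y y0 hn.
  exists g; split => //.
  case: (mobius g (x, y)) gd => u v [v0 [u1 [u2 [h1 h2]]]].
  have w0 : 0 < w by move: (w) w3 => w' ?; lra.
  by apply: closure_good => //; exact: ltW.
Qed.
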